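(* Let $q$ be a positive multiple of $24$, let $w_A,w_B:\mathbb{Z}/q\mathbb{Z}\to[0,1]$, and let $a,b:\mathbb{Z}/24\mathbb{Z}\to[0,1]$ be $a(k):=\frac{24}{q}\sum_{x\equiv k\ (\mathrm{mod}\ 24)}w_A(x)$, $b(k):=\frac{24}{q}\sum_{x\equiv k\ (\mathrm{mod}\ 24)}w_B(x)$ (sums over $x\in\mathbb{Z}/q\mathbb{Z}$). Then $$\Bigg|\sum_{\substack{m\in\mathbb{Z}/q\mathbb{Z}\\ q\nmid 24m}}\widehat{w_A}(m)\widehat{w_B}(m)\widehat{f_q}(-m)\Bigg|\le\frac1{24\sqrt5}\sqrt{\sum_{k\in\mathbb{Z}/24\mathbb{Z}}\big(a(k)-a(k)^2\big)}\sqrt{\sum_{k\in\mathbb{Z}/24\mathbb{Z}}\big(b(k)-b(k)^2\big)}.$$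
   Context: $e(\theta):=e^{2\pi i\theta}$. For $f:\mathbb{Z}/q\mathbb{Z}\to\mathbb{C}$, $\widehat f(r):=\frac1q\sum_{x\in\mathbb{Z}/q\mathbb{Z}}f(x)e(-rx/q)$, and $f_q(t):=\#\{x\in\mathbb{Z}/q\mathbb{Z}:x^2=t\}$. *)

(* Defs.v *)
From mathcomp Require Import all_boot all_order all_algebra.
From mathcomp Require Import all_classical all_reals all_analysis.
From mathcomp Require Export complex.
Import GRing.Theory Num.Theory.
Set Implicit Arguments. Unset Strict Implicit. Unset Printing Implicit Defensive.
Local Open Scope ring_scope.
Local Open Scope complex_scope.

Definition ee (R : realType) (t : R) : R[i] :=
  (cos (2 * pi * t)) +i* (sin (2 * pi * t)).

(* Fourier transform on Z/qZ (elements represented by 'I_q); frequency r : int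
   (only its class mod q matters):  fhat f r = 1/q sum_x f(x) e(-r x / q). *)
Definition fhat (R : realType) (q : nat) (f : 'I_q -> R[i]) (r : int) : R[i] :=
  (q%:R)^-1 * \sum_(x < q) f x * ee (- ((r%:~R * (x : nat)%:R) / q%:R) : R).

Definition fsq (R : realType) (q : nat) (t : 'I_q) : R[i] :=
  (#|[set x : 'I_q | (((x : nat) * x) %% q == (t : nat))%N]|)%:R.

Definition avg24 (R : realType) (q : nat) (w : 'I_q -> R) (k : 'I_24) : R :=
  (24%:R / q%:R) * \sum_(x < q | ((x : nat) %% 24 == (k : nat))%N) w x.

(* Main.v *)
Require Import Defs.
From mathcomp Require Import all_boot all_order all_algebra.
From mathcomp Require Import all_classical all_reals all_analysis.
From mathcomp Require Import complex.
From mathcomp Require Import zify ring lra.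
Import Order.TTheory GRing.Theory Num.Theory.
Local Open Scope ring_scope.
Local Open Scope complex_scope.
Section EE.
Variable R : realType.
Implicit Types s t : R.

Lemma ee_add s t : ee (s + t) = ee s * ee t.
Proof.
rewrite /ee mulrDr cosD sinD; apply/eqP; rewrite eq_complex /=.
by apply/andP; split; apply/eqP; ring.
Qed.

Lemma ee0 : ee (0 : R) = 1.
Proof. by rewrite /ee mulr0 cos0 sin0. Qed.

Lemma ee_nat (n : nat) : ee (n%:R : R) = 1.
Proof.
have h : 2 * pi * n%:R = 0 + (pi *+ 2) *+ n :> R.
  by rewrite add0r -mulr_natl -[pi *+ 2]mulr_natl; ring.
by rewrite /ee h (periodicn (@cosD2pi R)) (periodicn (@sinD2pi R)) cos0 sin0.
Qed.

Lemma eeN t : ee (- t) = Num.conj (ee t).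
Proof. by rewrite /ee mulrN cosN sinN. Qed.

Lemma ee_int (n : int) : ee (n%:~R : R) = 1.
Proof.
case: n => n; first by rewrite ee_nat.
by rewrite NegzE mulrNz eeN ee_nat conjC1.
Qed.

Lemma ee_mulJ t : ee t * Num.conj (ee t) = 1.
Proof. by rewrite -eeN -ee_add subrr ee0. Qed.

Lemma ee_natmul (n : nat) t : ee (n%:R * t) = ee t ^+ n.
Proof.
elim: n => [|n IH]; first by rewrite mul0r ee0 expr0.
by rewrite -addn1 natrD mulrDl mul1r ee_add IH exprD expr1.
Qed.

Lemma ee_neq1 t : 0 < t < 1 -> ee t != 1.
Proof.
move=> /andP[t0 t1]; apply/negP => /eqP h.
have hc : cos (2 * pi * t) = 1 by move: h => [].
have : cos ((pi * t) *+ 2) = 1 by rewrite -hc; congr cos; rewrite -mulr_natl; ring.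
rewrite cos_mulr2n => /eqP; rewrite subr_eq -mulr_natr.
have -> : (1 + 1 : R) = 1 * 2%:R by rewrite mul1r.
rewrite (inj_eq (mulIf _)) // => /eqP hc2.
have : `|cos (pi * t)| = 1.
  by apply/eqP; rewrite -(@eqrXn2 _ 2) // ?normr_ge0 // real_normK ?num_real // hc2 expr1n.
move/cos1sin0 => hs.
suff : 0 < sin (pi * t) by rewrite hs ltxx.
apply: sin_gt0_pi.
by rewrite mulr_gt0 ?pi_gt0 //= -[ltRHS]mulr1 ltr_pM2l ?pi_gt0.
Qed.
End EE.

Section Orth.
Variable R : realType.
Variable q : nat.
Hypothesis hq : (0 < q)%N.

Lemma qneq0 : (q%:R : R) != 0.
Proof. by rewrite pnatr_eq0 -lt0n. Qed.

Lemma ee_frac (k : int) (x : nat) :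
  ee (k%:~R * x%:R / q%:R : R) = ee (k%:~R / q%:R : R) ^+ x.
Proof. by rewrite -ee_natmul mulrA [x%:R * _]mulrC. Qed.

Lemma orth (k : int) :
  \sum_(x < q) ee (k%:~R * (x : nat)%:R / q%:R : R) =
  if (q%:Z %| k)%Z then q%:R else 0.
Proof.
rewrite (eq_bigr (fun x : 'I_q => ee (k%:~R / q%:R : R) ^+ x)); last by move=> x _; rewrite ee_frac.
case: ifP => hd.
  have -> : ee (k%:~R / q%:R : R) = 1.
    case/dvdzP: hd => c ->; rewrite intrM -mulrA.
    by rewrite (_ : (q%:~R : R) = q%:R) // divff ?qneq0 // mulr1 ee_int.
  by rewrite (eq_bigr (fun _ => 1)) ?sumr_const ?card_ord // => i _; rewrite expr1n.
set z := ee _.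
have zq : z ^+ q = 1.
  by rewrite /z -ee_natmul mulrCA divff ?qneq0 // mulr1 ee_int.
have z1 : z != 1.
  rewrite /z {1}(divz_eq k q%:Z) intrD intrM mulrDl -mulrA.
  rewrite (_ : (q%:Z%:~R : R) = q%:R) // divff ?qneq0 // mulr1 ee_add ee_int mul1r.
  apply: ee_neq1.
  have r0 : (0 <= (k %% q)%Z)%R by rewrite modz_ge0 // eqz_nat -lt0n.
  have rq : ((k %% q)%Z < q%:Z)%R by rewrite ltz_pmod // ltz_nat.
  have rn0 : (k %% q)%Z != 0 by apply/negP => /eqP/dvdz_mod0P; rewrite hd.
  have qgt0 : (0 : R) < q%:R by rewrite ltr0n.
  apply/andP; split.
    by rewrite divr_gt0 // ltr0z lt_def rn0 r0.
  by rewrite -(ltr_pM2r qgt0) mul1r divfK ?qneq0 // -[q%:R]/(q%:Z%:~R) ltr_int.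
have := subrX1 z q; rewrite zq subrr => /esym/eqP; rewrite mulf_eq0 subr_eq0 (negbTE z1) /=.
by move/eqP.
Qed.

Definition E (n : int) : R[i] := ee (n%:~R / q%:R).

Lemma E_add a b : E (a + b) = E a * E b.
Proof. by rewrite /E intrD mulrDl ee_add. Qed.

Lemma E_N a : E (- a) = Num.conj (E a).
Proof. by rewrite /E -eeN intrN mulNr. Qed.

Lemma E_mulJ a : E a * Num.conj (E a) = 1.
Proof. exact: ee_mulJ. Qed.

Lemma E_mult (c : int) : E (c * q%:Z) = 1.
Proof.
by rewrite /E intrM -mulrA (_ : (q%:Z%:~R : R) = q%:R) // divff ?qneq0 // mulr1 ee_int.
Qed.

Lemma E_congr a b : (q%:Z %| a - b)%Z -> E a = E b.
Proof.
case/dvdzP => c h; have -> : a = (b + c * q%:Z)%R by rewrite -h addrC subrK.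
by rewrite E_add E_mult mulr1.
Qed.

Lemma orthE (k : int) :
  \sum_(x < q) E (k * (x : nat)%:Z) = if (q%:Z %| k)%Z then q%:R else 0.
Proof. rewrite -orth; apply: eq_bigr => x _; by rewrite /E intrM. Qed.

Lemma fhatE (f : 'I_q -> R[i]) (r : int) :
  fhat f r = q%:R^-1 * \sum_(x < q) f x * E (- (r * (x : nat)%:Z)).
Proof.
rewrite /fhat; congr (_ * _); apply: eq_bigr => x _; congr (_ * _).
by rewrite /E intrN intrM mulNr.
Qed.
End Orth.

Lemma sum_mult (V : nmodType) (n d : nat) (F : nat -> V) : (0 < d)%N ->
  \sum_(0 <= m < n * d | (d %| m)%N) F m = \sum_(0 <= j < n) F (j * d)%N.
Proof.
move=> d0; elim: n => [|n IH]; first by rewrite mul0n !big_geq.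
rewrite mulSnr (@big_cat_nat _ _ _ (n * d)) ?leq_addr //= IH big_nat_recr //=.
congr (_ + _).
rewrite big_ltn_cond; last by rewrite -{1}[(n*d)%N]addn0 ltn_add2l.
rewrite (_ : (d %| n * d)%N = true) /=; last exact: dvdn_mull.
rewrite big_nat_cond big1 ?addr0 //.
move=> i /andP[/andP[h1 h2] hd].
exfalso; move: hd; apply/negP.
have hi : i = (n * d + (i - n * d))%N by rewrite subnKC // ltnW.
rewrite hi /dvdn modnMDl modn_small; last by rewrite ltn_subLR // ltnW.
by rewrite subn_eq0 -ltnNge.
Qed.

Lemma conjR (R : realType) (x : R) : Num.conj (x%:C) = x%:C.
Proof. exact: conjc_real. Qed.
Lemma cjM (R : realType) (x y : R[i]) : Num.conj (x * y) = Num.conj x * Num.conj y.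
Proof. exact: rmorphM. Qed.
Lemma cjV (R : realType) (x : R[i]) : Num.conj (x^-1) = (Num.conj x)^-1.
Proof. exact: fmorphV. Qed.
Lemma cjS (R : realType) (I : Type) (r : seq I) (P : pred I) (F : I -> R[i]) :
  Num.conj (\sum_(i <- r | P i) F i) = \sum_(i <- r | P i) Num.conj (F i).
Proof. exact: rmorph_sum. Qed.

Section Pars.
Variable R : realType.
Variable q : nat.
Hypothesis hq : (0 < q)%N.
Variable w : 'I_q -> R.
Local Notation E := (@E R q).
Local Notation A m := (fhat (fun x => (w x)%:C) m).

Lemma A_conj (m : int) :
  Num.conj (A m) = q%:R^-1 * \sum_(y < q) (w y)%:C * E (m * (y : nat)%:Z).
Proof.
rewrite fhatE cjM cjV conjC_nat cjS; congr (_ * _).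
apply: eq_bigr => y _; by rewrite cjM conjR -E_N opprK.
Qed.

Lemma A_norm2 (m : int) :
  A m * Num.conj (A m) = (q%:R^-1 * q%:R^-1) *
    \sum_(x < q) \sum_(y < q) (w x * w y)%:C * E (((y : nat)%:Z - (x : nat)%:Z) * m).
Proof.
rewrite A_conj fhatE mulrACA; congr (_ * _).
rewrite mulr_suml; apply: eq_bigr => x _; rewrite mulr_sumr; apply: eq_bigr => y _.
rewrite rmorphM mulrACA -E_add; congr (_ * E _); ring.
Qed.

Lemma dvd_ord (x y : 'I_q) : (q%:Z %| ((y : nat)%:Z - (x : nat)%:Z)%R)%Z = (x == y).
Proof.
rewrite -eqz_mod_dvd !modz_nat !modn_small // eqz_nat; apply/eqP/eqP => [h|->//].
by apply: val_inj.
Qed.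

Lemma A_total :
  \sum_(m < q) A (m : nat)%:Z * Num.conj (A (m : nat)%:Z) =
  q%:R^-1 * (\sum_(x < q) w x ^+ 2)%:C.
Proof.
under eq_bigr => m _ do rewrite A_norm2.
rewrite -mulr_sumr exchange_big /=.
under eq_bigr => x _ do rewrite exchange_big /=.
have qC : (q%:R : R[i]) != 0 by rewrite pnatr_eq0 -lt0n.
rewrite -mulrA; congr (_ * _); rewrite rmorph_sum mulr_sumr; apply: eq_bigr => x _.
rewrite [X in _ * X](bigD1 x) //= [X in _ + X]big1 ?addr0; last first.
  move=> y hyx; rewrite -mulr_sumr (orthE _ _ hq) dvd_ord eq_sym (negbTE hyx) mulr0 //.
by rewrite -mulr_sumr (orthE _ _ hq) dvd_ord eqxx /= mulrCA mulVf // mulr1 expr2.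
Qed.
End Pars.

Section Part.
Variable R : realType.
Variable q : nat.

Lemma part24 (f : 'I_q -> R) :
  \sum_(k < 24) \sum_(x < q | ((x : nat) %% 24 == k)%N) f x = \sum_(x < q) f x.
Proof.
symmetry.
rewrite (partition_big (fun x : 'I_q => Ordinal (@ltn_pmod x 24 isT)) predT) //=.
Qed.

Lemma sq24 (f : 'I_q -> R) :
  \sum_(k < 24) (\sum_(x < q | ((x : nat) %% 24 == k)%N) f x) ^+ 2 =
  \sum_(x < q) \sum_(y < q) (if ((x : nat) %% 24 == (y : nat) %% 24)%N then f x * f y else 0).
Proof.
rewrite -(part24 (fun x => \sum_(y < q) (if ((x : nat) %% 24 == (y : nat) %% 24)%N then f x * f y else 0))).
apply: eq_bigr => k _; rewrite expr2 mulr_suml; apply: eq_bigr => x /eqP hx.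
rewrite mulr_sumr big_mkcond /=; apply: eq_bigr => y _.
by rewrite hx eq_sym.
Qed.
End Part.

Section Excl.
Variable R : realType.
Variable q : nat.
Hypothesis hq : (0 < q)%N.
Hypothesis h24 : (24 %| q)%N.
Variable w : 'I_q -> R.
Local Notation A m := (fhat (fun x => (w x)%:C) m).
Let q' := (q %/ 24)%N.
Lemma qq' : q = (q' * 24)%N. Proof. by rewrite divnK. Qed.
Lemma q'gt0 : (0 < q')%N.
Proof. by move: hq; rewrite qq' muln_gt0 => /andP[]. Qed.

Lemma E_q' (k : int) : @E R q (k * q'%:Z) = @E R 24 k.
Proof.
rewrite /E intrM; congr ee.
have h0 : (q'%:R : R) != 0 by rewrite pnatr_eq0 -lt0n q'gt0.
rewrite (_ : (q%:R : R) = (q' * 24)%:R); last by rewrite -qq'.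
rewrite natrM (_ : (q'%:Z%:~R : R) = q'%:R) //.
by field; exact: h0.
Qed.

Lemma dvd24 (x y : nat) :
  (24%:Z %| (y%:Z - x%:Z)%R)%Z = (x %% 24 == y %% 24)%N.
Proof. by rewrite -eqz_mod_dvd !modz_nat eqz_nat eq_sym. Qed.

Lemma A_excl :
  \sum_(m < q | (q %| 24 * m)%N) A (m : nat)%:Z * Num.conj (A (m : nat)%:Z) =
  q%:R^-1 * q%:R^-1 * 24%:R *
  (\sum_(x < q) \sum_(y < q)
      (if ((x : nat) %% 24 == (y : nat) %% 24)%N then w x * w y else 0))%:C.
Proof.
have hP : forall m, (q %| 24 * m)%N = (q' %| m)%N.
  by move=> m; rewrite {1}qq' [(24 * m)%N]mulnC dvdn_pmul2r.
under eq_bigl => m do rewrite hP.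
pose F m := A m%:Z * Num.conj (A m%:Z).
rewrite -(big_mkord (fun m => (q' %| m)%N) F).
have := @sum_mult _ 24 q' F q'gt0; rewrite mulnC -qq' => ->.
rewrite big_mkord /F.
under eq_bigr => j _ do rewrite A_norm2.
rewrite -mulr_sumr exchange_big /=.
under eq_bigr => x _ do rewrite exchange_big /=.
rewrite -mulrA; congr (_ * _); rewrite rmorph_sum mulr_sumr; apply: eq_bigr => x _.
rewrite rmorph_sum mulr_sumr; apply: eq_bigr => y _.
rewrite -mulr_sumr.
under eq_bigr => j _ do rewrite PoszM mulrA E_q'.
rewrite (orthE _ _ (isT : (0 < 24)%N)) dvd24.
case: ifP => _; last by rewrite !mulr0.
exact: mulrC.
Qed.
End Excl.

Lemma count_dvd (K : pzSemiRingType) (q k : nat) : (0 < q)%N ->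
  \sum_(h < q | (q %| k * h)%N) (1 : K) = (gcdn k q)%:R.
Proof.
move=> hq.
set g := gcdn k q; set d := (q %/ g)%N; set k' := (k %/ g)%N.
have g0 : (0 < g)%N by rewrite gcdn_gt0 hq orbT.
have hq' : q = (d * g)%N by rewrite divnK // dvdn_gcdr.
have hk : k = (k' * g)%N by rewrite divnK // dvdn_gcdl.
have hcop : coprime d k'.
  rewrite /coprime; apply/eqP.
  have : (gcdn d k' * g)%N = (1 * g)%N by rewrite muln_gcdl -hq' -hk mul1n gcdnC.
  by move/eqP; rewrite eqn_pmul2r // => /eqP.
have hP : forall h, (q %| k * h)%N = (d %| h)%N.
  by move=> h; rewrite {1}hq' {1}hk mulnAC dvdn_pmul2r // Gauss_dvdr.
under eq_bigl => h do rewrite hP.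
rewrite -(big_mkord (fun h => (d %| h)%N) (fun _ => (1 : K))).
have d0 : (0 < d)%N by move: hq; rewrite hq' muln_gt0 => /andP[].
have := @sum_mult K g d (fun _ => 1) d0; rewrite mulnC -hq' => ->.
by rewrite sumr_const_nat subn0.
Qed.

Lemma five_gcd (q m : nat) : (0 < q)%N -> ~~ (q %| 24 * m)%N -> (5 * gcdn (2 * m) q <= q)%N.
Proof.
move=> hq hn.
set g := gcdn (2 * m) q; set d := (q %/ g)%N.
have hq' : q = (d * g)%N by rewrite divnK // dvdn_gcdr.
have d0 : (0 < d)%N by move: hq; rewrite hq' muln_gt0 => /andP[].
have hd : (4 < d)%N.
  rewrite ltnNge; apply/negP => hd4; apply: (negP hn).
  have h2 : (d * 2 %| 24)%N by move: hd4 d0; case: (d) => [|[|[|[|[|]]]]].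
  rewrite hq'; apply: (@dvdn_trans (d * (2 * m))).
    by rewrite dvdn_pmul2l // dvdn_gcdl.
  by rewrite mulnA dvdn_mul.
by rewrite hq' leq_mul2r hd orbT.
Qed.

Section Gauss.
Variable R : realType.
Variable q : nat.
Hypothesis hq : (0 < q)%N.
Local Notation E := (@E R q).

Lemma card_sum (P : pred 'I_q) :
  (#|[set x | P x]|)%:R = \sum_(x < q) (if P x then 1 else 0 : R[i]).
Proof.
rewrite -sum1_card natr_sum big_mkcond /=; apply: eq_bigr => x _.
by rewrite inE; case: (P x).
Qed.

Lemma E_modeq (m a b : nat) : (a = b %[mod q])%N ->
  E (m%:Z * a%:Z) = E (m%:Z * b%:Z).
Proof.
move=> hab; apply: (@E_congr R q hq); rewrite -!PoszM -eqz_mod_dvd !modz_nat eqz_nat.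
by apply/eqP; rewrite -modnMmr hab modnMmr.
Qed.

Lemma S_def (m : nat) :
  \sum_(t < q) @fsq R q t * E (m%:Z * (t : nat)%:Z) =
  \sum_(x < q) E (m%:Z * ((x : nat) * (x : nat))%:Z).
Proof.
under eq_bigr => t _ do rewrite /fsq card_sum mulr_suml.
rewrite exchange_big /=; apply: eq_bigr => x _.
rewrite (bigD1 (Ordinal (ltn_pmod ((x : nat) * x) hq))) //= eqxx mul1r.
rewrite big1 ?addr0; last first.
  move=> t ht; case: eqP => [h|]; last by rewrite mul0r.
  by exfalso; move: ht; apply/negP; rewrite negbK; apply/eqP/val_inj; rewrite /= h.
by apply: E_modeq; rewrite modn_mod.
Qed.

Definition shiftq (y : 'I_q) (h : 'I_q) : 'I_q := Ordinal (ltn_pmod ((y : nat) + h) hq).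

Lemma shiftq_inj y : injective (shiftq y).
Proof.
move=> h1 h2 /(congr1 val) /= /eqP; rewrite eqn_modDl !modn_small // => /eqP h.
exact: val_inj.
Qed.

Lemma S_sq (m : nat) :
  (\sum_(x < q) E (m%:Z * ((x : nat) * (x : nat))%:Z)) *
    Num.conj (\sum_(x < q) E (m%:Z * ((x : nat) * (x : nat))%:Z)) =
  \sum_(h < q) E (m%:Z * ((h : nat) * (h : nat))%:Z) *
     (if (q %| 2 * m * h)%N then q%:R else 0).
Proof.
rewrite cjS mulr_sumr.
transitivity (\sum_(y < q) \sum_(h < q) E (m%:Z * ((h : nat) * (h : nat))%:Z) *
                 E ((2 * m * h)%N%:Z * (y : nat)%:Z)).
  apply: eq_bigr => y _; rewrite mulr_suml (reindex_inj (shiftq_inj y)) /=.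
  apply: eq_bigr => h _.
  rewrite (@E_modeq m _ (((y : nat) + h) * ((y : nat) + h))%N); last by rewrite modnMm.
  rewrite -E_N -!E_add; congr E; rewrite !PoszM !PoszD; ring.
rewrite exchange_big /=; apply: eq_bigr => h _.
by rewrite -mulr_sumr (orthE _ _ hq) dvdzE.
Qed.

Lemma normE1 (a : int) : `|E a| = 1.
Proof.
apply/eqP; rewrite -(@sqrp_eq1 _ `|E a|) ?normr_ge0 //.
by rewrite normCK E_mulJ.
Qed.

Lemma G_bound (m : nat) : ~~ (q %| 24 * m)%N ->
  `|fhat (@fsq R q) (- m%:Z)| ^+ 2 <= 5%:R^-1.
Proof.
move=> hm.
rewrite fhatE.
under eq_bigr => t _ do rewrite mulNr opprK.
rewrite S_def.
set S := \sum_(x < q) _.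
have qC : (0 : R[i]) < q%:R by rewrite ltr0n.
have hS : `|S| ^+ 2 <= q%:R * (gcdn (2 * m) q)%:R.
  rewrite -[X in X <= _]ger0_norm ?exprn_ge0 ?normr_ge0 // normCK S_sq.
  apply: le_trans (ler_norm_sum _ _ _) _.
  rewrite (eq_bigr (fun h : 'I_q => if (q %| 2 * m * h)%N then q%:R else 0)); last first.
    by move=> h _; rewrite normrM normE1 mul1r; case: ifP => _; rewrite ?normr0 // normr_nat.
  rewrite -big_mkcond /= -(count_dvd _ _ _ hq) mulr_sumr.
  by apply: ler_sum => h _; rewrite mulr1.
rewrite normrM exprMn normfV normr_nat.
apply: le_trans (ler_wpM2l _ hS) _; first by rewrite exprn_ge0 // invr_ge0 ler0n.
rewrite expr2 -mulrA mulKf ?gt_eqF //.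
rewrite ler_pdivrMl // ler_pdivlMr ?ltr0n // -natrM ler_nat mulnC.
exact: five_gcd.
Qed.
End Gauss.
Lemma CS_sq (R : realType) (I : finType) (P : pred I) (f g : I -> R) :
  (\sum_(i | P i) f i * g i) ^+ 2 <=
  (\sum_(i | P i) f i ^+ 2) * (\sum_(i | P i) g i ^+ 2).
Proof.
set A := \sum_(i | P i) f i ^+ 2; set B := \sum_(i | P i) f i * g i.
set C := \sum_(i | P i) g i ^+ 2.
have h : 0 <= \sum_(i | P i) \sum_(j | P j) (f i * g j - f j * g i) ^+ 2.
  by apply: sumr_ge0 => i _; apply: sumr_ge0 => j _; apply: sqr_ge0.
have e : \sum_(i | P i) \sum_(j | P j) (f i * g j - f j * g i) ^+ 2 =
         A * C + C * A - 2 * (B * B).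
  rewrite (eq_bigr (fun i => f i ^+ 2 * C + g i ^+ 2 * A - 2 * (f i * g i) * B)).
    rewrite sumrB big_split /= -(@mulr_suml _ _ _ _ _ C) -(@mulr_suml _ _ _ _ _ A) -(@mulr_suml _ _ _ _ _ B) -mulr_sumr.
    by rewrite mulrA.
  move=> i _; rewrite /A /B /C !mulr_sumr -!big_split -sumrB /=.
  by apply: eq_bigr => j _; ring.
rewrite e in h; nra.
Qed.

Lemma CS (R : realType) (I : finType) (P : pred I) (f g : I -> R) :
  \sum_(i | P i) f i * g i <=
  Num.sqrt (\sum_(i | P i) f i ^+ 2) * Num.sqrt (\sum_(i | P i) g i ^+ 2).
Proof.
rewrite -sqrtrM; last by apply: sumr_ge0 => i _; apply: sqr_ge0.
apply: (le_trans _ (@ler_wsqrtr R _ _ (CS_sq _ _ P f g))).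
by rewrite sqrtr_sqr ler_norm.
Qed.

Lemma normc2 (R : realType) (z : R[i]) : ((Normc.normc z) ^+ 2)%:C = z * Num.conj z.
Proof. by rewrite rmorphXn -normCK. Qed.

Section Final.
Variable R : realType.
Variable q : nat.
Hypothesis hq : (0 < q)%N.
Hypothesis h24 : (24 %| q)%N.
Variable w : 'I_q -> R.
Hypothesis hw : forall x, 0 <= w x <= 1.
Local Notation A m := (fhat (fun x => (w x)%:C) m).

Lemma Mpart :
  \sum_(m < q | ~~ (q %| 24 * m)%N) Normc.normc (A (m : nat)%:Z) ^+ 2 <=
  24%:R^-1 * \sum_(k < 24) (avg24 w k - avg24 w k ^+ 2).
Proof.
set D := \sum_(x < q) \sum_(y < q)
      (if ((x : nat) %% 24 == (y : nat) %% 24)%N then w x * w y else 0).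
have key : \sum_(m < q | ~~ (q %| 24 * m)%N) Normc.normc (A (m : nat)%:Z) ^+ 2 =
    q%:R^-1 * (\sum_(x < q) w x ^+ 2) - q%:R^-1 * q%:R^-1 * 24%:R * D.
  apply: complexI.
  have eT := A_total R q hq w.
  rewrite (bigID (fun m : 'I_q => (q %| 24 * m)%N)) /= (A_excl R q hq h24 w) in eT.
  rewrite rmorph_sum (eq_bigr _ (fun (m : 'I_q) _ => normc2 R (A (m : nat)%:Z))).
  apply: (addrI (q%:R^-1 * q%:R^-1 * 24%:R * D%:C)); rewrite eT.
  by rewrite rmorphB !rmorphM fmorphV !rmorph_nat addrC subrK.
rewrite key.
have hD : D = \sum_(k < 24) (\sum_(x < q | ((x : nat) %% 24 == k)%N) w x) ^+ 2.
  by rewrite sq24.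
have hY : \sum_(k < 24) avg24 w k = 24%:R / q%:R * \sum_(x < q) w x.
  by rewrite /avg24 -mulr_sumr part24.
have hZ : \sum_(k < 24) avg24 w k ^+ 2 = (24%:R / q%:R) ^+ 2 * D.
  by rewrite hD mulr_sumr; apply: eq_bigr => k _; rewrite /avg24 exprMn.
have hXY : \sum_(x < q) w x ^+ 2 <= \sum_(x < q) w x.
  apply: ler_sum => x _; have /andP[h0 h1] := hw x.
  by rewrite expr2 -[leRHS]mulr1 ler_wpM2l.
rewrite sumrB hY hZ.
have qp : 0 < (q%:R : R)^-1 by rewrite invr_gt0 ltr0n.
set r := (q%:R : R)^-1 in qp *.
set X := \sum_(x < q) w x ^+ 2 in hXY *.
set Y := \sum_(x < q) w x in hXY *.
have -> : 24%:R^-1 * (24%:R * r * Y - (24%:R * r) ^+ 2 * D) = r * Y - r * r * 24%:R * D.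
  by field.
by rewrite lerD2r ler_pM2l.
Qed.
End Final.

Lemma G_bound_R (R : realType) (q : nat) (hq : (0 < q)%N) (m : nat) :
  ~~ (q %| 24 * m)%N ->
  Normc.normc (fhat (@fsq R q) (- m%:Z)) <= (Num.sqrt 5)^-1.
Proof.
move=> hm; have := G_bound R q hq m hm.
set z := fhat _ _.
have h0 : 0 <= Normc.normc z by rewrite -ler0c; exact: (normr_ge0 z).
rewrite (_ : `|z| = (Normc.normc z)%:C) // -rmorphXn.
rewrite (_ : (5%:R^-1 : R[i]) = (5%:R^-1 : R)%:C); last by rewrite fmorphV rmorph_nat.
rewrite lecR => h.
rewrite -sqrtrV ?ler0n //.
have := @ler_wsqrtr R _ _ h; rewrite sqrtr_sqr ger0_norm //.
Qed.

Theorem lemma3p5 (R : realType) (q : nat) (hq : (0 < q)%N) (h24 : (24 %| q)%N)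
  (wA wB : 'I_q -> R)
  (hA : forall x, 0 <= wA x <= 1) (hB : forall x, 0 <= wB x <= 1) :
  `| \sum_(m < q | ~~ (q %| 24 * m)%N)
        fhat (fun x => (wA x)%:C) (m : nat)%:Z
      * fhat (fun x => (wB x)%:C) (m : nat)%:Z
      * fhat (@fsq R q) (- (m : nat)%:Z) |
  <= ((24 * Num.sqrt 5)^-1
      * Num.sqrt (\sum_(k < 24) (avg24 wA k - avg24 wA k ^+ 2))
      * Num.sqrt (\sum_(k < 24) (avg24 wB k - avg24 wB k ^+ 2)))%:C.
Proof.
set nA := fun m : 'I_q => Normc.normc (fhat (fun x => (wA x)%:C) (m : nat)%:Z).
set nB := fun m : 'I_q => Normc.normc (fhat (fun x => (wB x)%:C) (m : nat)%:Z).
set nG := fun m : 'I_q => Normc.normc (fhat (@fsq R q) (- (m : nat)%:Z)).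
apply: le_trans (ler_norm_sum _ _ _) _.
rewrite (eq_bigr (fun m : 'I_q => (nA m * nB m * nG m)%:C)); last first.
  by move=> m _; rewrite normrM normrM !rmorphM.
rewrite -rmorph_sum lecR.
have nge0 : forall z : R[i], 0 <= Normc.normc z.
  by move=> z; rewrite -ler0c; exact: (normr_ge0 z).
have s1 : \sum_(m < q | ~~ (q %| 24 * m)%N) nA m * nB m * nG m <=
          (Num.sqrt 5)^-1 * \sum_(m < q | ~~ (q %| 24 * m)%N) nA m * nB m.
  rewrite mulr_sumr; apply: ler_sum => m hm.
  rewrite mulrC; apply: ler_wpM2r; first by rewrite mulr_ge0 ?nge0.
  exact: G_bound_R.
apply: le_trans s1 _.
have s2 := CS R _ (fun m : 'I_q => ~~ (q %| 24 * m)%N) nA nB.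
have s3 := Mpart R q hq h24 wA hA.
have s4 := Mpart R q hq h24 wB hB.
set SA := \sum_(k < 24) _ in s3 *.
set SB := \sum_(k < 24) _ in s4 *.
have i5 : 0 <= (Num.sqrt 5 : R)^-1 by rewrite invr_ge0 sqrtr_ge0.
apply: le_trans (ler_wpM2l i5 s2) _.
apply: le_trans (ler_wpM2l i5 (ler_pM (sqrtr_ge0 _) (sqrtr_ge0 _)
   (@ler_wsqrtr R _ _ s3) (@ler_wsqrtr R _ _ s4))) _.
have h24i : 0 <= (24%:R : R)^-1 by rewrite invr_ge0 ler0n.
rewrite !sqrtrM //.
set s := Num.sqrt (24%:R^-1 : R).
have ss : s * s = 24%:R^-1 by rewrite -expr2 sqr_sqrtr.
rewrite invfM -ss.
rewrite le_eqVlt; apply/orP; left; apply/eqP; ring.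
Qed.
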